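(* For all graphs $G$ and $H$ (with non-empty vertex sets), $$\operatorname{tw}(G\boxtimes H)\geq \eta(H)(\operatorname{tw}(G)+1)-1.$$
   Context: $\operatorname{tw}$ denotes treewidth. The Hadwiger number $\eta(H)$ is the maximum integer $t$ such that $K_t$ is a minor of $H$. The strong product $G\boxtimes H$ has vertex set $V(G)\times V(H)$, with distinct vertices $(a,v),(b,u)$ adjacent iff ($a=b$ or $ab\in E(G)$) and ($u=v$ or $uv\in E(H)$). *)

(* Defs.v *)
(* Finite simple graphs: a finType V with a symmetric,
   irreflexive relation e : rel V. *)
From Stdlib Require Import ClassicalEpsilon.
From mathcomp Require Import all_boot.
Set Implicit Arguments. Unset Strict Implicit. Unset Printing Implicit Defensive.

Definition induced_rel (T : finType) (e : rel T) (S : {set T}) : rel T :=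
  fun x y => [&& e x y, x \in S & y \in S].

(* S induces a connected subgraph (vacuous for S empty) *)
Definition connected_in (T : finType) (e : rel T) (S : {set T}) : bool :=
  [forall x in S, forall y in S, connect (induced_rel e S) x y].

(* a (finite, nonempty) tree: connected graph with |I|-1 edges
   (each edge is counted twice as an ordered pair) *)
Definition is_tree (I : finType) (t : rel I) : Prop :=
  [/\ symmetric t, irreflexive t, 0 < #|I|,
      (forall i j, connect t i j)
    & #|[set p : I * I | t p.1 p.2]| = 2 * (#|I| - 1)].

Definition tree_decomposition (V : finType) (e : rel V)
    (I : finType) (t : rel I) (B : I -> {set V}) : Prop :=
  [/\ is_tree t,
      (forall v, exists i, v \in B i),
      (forall u v, e u v -> exists i, (u \in B i) && (v \in B i))
    & (forall v, connected_in t [set i | v \in B i])].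

Definition has_tw_le (V : finType) (e : rel V) (k : nat) : Prop :=
  exists (I : finType) (t : rel I) (B : I -> {set V}),
    tree_decomposition e t B /\ forall i, #|B i| <= k.+1.

Lemma has_tw_le_ex (V : finType) (e : rel V) : exists k, has_tw_le e k.
Proof.
exists #|V|; exists unit, (fun _ _ => false), (fun _ => setT); split; last first.
  by move=> _; rewrite cardsT.
split.
- split.
  + by [].
  + by [].
  + by rewrite card_unit.
  + by case; case; rewrite connect0.
  + rewrite card_unit /=; apply/eqP; rewrite cards_eq0; apply/eqP/setP=> p.
    by rewrite !inE.
- by move=> v; exists tt; rewrite inE.
- by move=> u v _; exists tt; rewrite !inE.
- by move=> v; apply/forallP; case; apply/implyP=> _; apply/forallP; case;
     apply/implyP=> _; rewrite connect0.
Qed.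

Definition dec_tw (V : finType) (e : rel V) : pred nat :=
  fun k => if excluded_middle_informative (has_tw_le e k) then true else false.

Lemma dec_tw_ex (V : finType) (e : rel V) : exists k, dec_tw e k.
Proof.
have [k Hk] := has_tw_le_ex e; exists k; rewrite /dec_tw.
by case: excluded_middle_informative.
Qed.

Definition treewidth (V : finType) (e : rel V) : nat := ex_minn (dec_tw_ex e).

Definition has_K_minor (V : finType) (e : rel V) (n : nat) : bool :=
  [exists B : {ffun 'I_n -> {set V}},
    [&& [forall i, B i != set0],
        [forall i, connected_in e (B i)],
        [forall i, forall j, (i != j) ==> [disjoint B i & B j]]
      & [forall i, forall j, (i != j) ==>
           [exists x in B i, exists y in B j, e x y]]]].

(* Hadwiger number: largest n with K_n a minor (necessarily n <= |V|) *)
Definition hadwiger (V : finType) (e : rel V) : nat :=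
  \max_(n < #|V|.+1 | has_K_minor e n) (n : nat).

Definition strong_prod (V W : finType) (e : rel V) (f : rel W) : rel (V * W) :=
  fun x y => [&& x != y, (x.1 == y.1) || e x.1 y.1 & (x.2 == y.2) || f x.2 y.2].

(* Main.v *)
Require Import Defs.
From Stdlib Require Import ClassicalEpsilon.
From mathcomp Require Import all_boot zify.
Set Warnings "-notation-overridden".
Set Implicit Arguments. Unset Strict Implicit. Unset Printing Implicit Defensive.


Definition dP (I : finType) (t : rel I) (r x : I) (k : nat) : bool :=
  [exists q : k.-tuple I, path t r q && (last r q == x)].
Definition dQ (I : finType) (t : rel I) (r x : I) (k : nat) : bool :=
  dP t r x k || ~~ connect t r x.

Lemma dQ_ex (I : finType) (t : rel I) (r x : I) : exists k, dQ t r x k.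
Proof.
case: (boolP (connect t r x)) => [/connectP [q pq ->]|nc]; last first.
  by exists 0; rewrite /dQ nc orbT.
exists (size q); apply/orP; left; apply/existsP; exists (in_tuple q).
by rewrite /= pq eqxx.
Qed.

Definition depth (I : finType) (t : rel I) (r x : I) : nat := ex_minn (dQ_ex t r x).
Definition par (I : finType) (t : rel I) (r x : I) : I :=
  odflt x [pick y | t x y && ((depth t r y).+1 == depth t r x)].

Lemma dP_mk (I : finType) (t : rel I) (r x : I) (q : seq I) :
  path t r q -> last r q = x -> dP t r x (size q).
Proof. by move=> pq lq; apply/existsP; exists (in_tuple q); rewrite /= pq lq eqxx. Qed.

Lemma depth_spec (I : finType) (t : rel I) (r x : I) :
  connect t r x ->
  dP t r x (depth t r x) /\ forall k, dP t r x k -> depth t r x <= k.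
Proof.
move=> c; rewrite /depth; case: ex_minnP => m Hm Hmin; split.
  by move: Hm; rewrite /dQ c orbF.
by move=> k Hk; apply: Hmin; rewrite /dQ Hk.
Qed.

Lemma depth_r (I : finType) (t : rel I) (r : I) : depth t r r = 0.
Proof.
have [_ H] := depth_spec (connect0 t r).
by apply/eqP; rewrite -leqn0; apply: H; exact: (dP_mk (q := [::])).
Qed.

Lemma depth0 (I : finType) (t : rel I) (r x : I) :
  connect t r x -> depth t r x = 0 -> x = r.
Proof.
move=> c d0; have [H _] := depth_spec c; move: H; rewrite d0.
by case/existsP=> q /andP[_ /eqP <-]; rewrite tuple0.
Qed.

Lemma depth_edge (I : finType) (t : rel I) (r x y : I) :
  connect t r y -> t y x -> depth t r x <= (depth t r y).+1.
Proof.
move=> cy tyx; have cx : connect t r x.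
  by apply: connect_trans cy (connect1 tyx).
have [Hy _] := depth_spec cy; have [_ Hx] := depth_spec cx.
case/existsP: Hy => q /andP[pq /eqP lq].
have := Hx _ (dP_mk (q := rcons q x) _ _); rewrite size_rcons size_tuple; apply.
  by rewrite rcons_path pq lq.
by rewrite last_rcons.
Qed.

Lemma par_spec (I : finType) (t : rel I) (r x : I) :
  symmetric t -> (forall y, connect t r y) -> x != r ->
  t x (par t r x) /\ (depth t r (par t r x)).+1 = depth t r x.
Proof.
move=> ts Hc xr.
have [Hx _] := depth_spec (Hc x).
case/existsP: Hx => q0 /andP[pq /eqP lq].
have sq := size_tuple q0; move: (tval q0) sq pq lq => {q0} q sq pq lq.
have [y ty dy] : exists2 y, t y x & (depth t r y).+1 = depth t r x.
  move: sq pq lq; case/lastP: q => [|q' z] /= sq.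
    by move=> _ rx; rewrite rx eqxx in xr.
  rewrite rcons_path last_rcons => /andP[pq' tz] zx; subst z.
  exists (last r q') => //.
  have [_ Hy] := depth_spec (Hc (last r q')).
  have := Hy _ (dP_mk pq' erefl).
  have := depth_edge (Hc (last r q')) tz.
  have -> : size q' = (depth t r x).-1.
    by rewrite -sq size_rcons.
  have dpos : 0 < depth t r x.
    by rewrite lt0n; apply/eqP => /(depth0 (Hc x)) /eqP; rewrite (negbTE xr).
  by move: dpos; case: (depth t r x) => [|n] //= _ h1 h2; congr S; apply/eqP; rewrite eqn_leq h2 -ltnS h1.

rewrite /par; case: (pickP [pred z | t x z && ((depth t r z).+1 == depth t r x)]) => [z /andP[tz0 /eqP dz0]|none] //=.
by have := none y; rewrite /= ts ty dy eqxx.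
Qed.

Lemma par_r (I : finType) (t : rel I) (r : I) : par t r r = r.
Proof.
rewrite /par; case: (pickP [pred z | t r z && ((depth t r z).+1 == depth t r r)]) => [z /andP[_ /eqP]|//].
by rewrite depth_r.
Qed.

Lemma tree_edges (I : finType) (t : rel I) (r : I) :
  is_tree t ->
  forall x z, t x z -> (x != r /\ z = par t r x) \/ (z != r /\ x = par t r z).
Proof.
case=> ts ti _ Hc Hcard.
have Hc' : forall y, connect t r y by [].
set E := [set q : I * I | t q.1 q.2].
set A := [set (x, par t r x) | x in [set~ r]].
set B := [set (par t r x, x) | x in [set~ r]].
have cA : #|A| = #|I|.-1.
  by rewrite card_imset ?cardsC1 // => x y [].
have cB : #|B| = #|I|.-1.
  by rewrite card_imset ?cardsC1 // => x y [].
have AB0 : A :&: B = set0.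
  apply/setP=> q; rewrite !inE; apply/negbTE/negP => /andP[].
  case/imsetP=> x; rewrite !inE => xr ->.
  case/imsetP=> y; rewrite !inE => yr [] e1 e2.
  have [_ dx] := par_spec ts Hc' xr.
  have [_ dy] := par_spec ts Hc' yr.
  rewrite e2 in dx; rewrite -e1 in dy.
  lia.
have sub : A :|: B \subset E.
  apply/subsetP=> q; rewrite !inE; case/orP=> /imsetP[x]; rewrite !inE => xr ->;
    have [tx _] := par_spec ts Hc' xr => //=.
  by rewrite ts.
have EAB : A :|: B = E.
  apply/eqP; rewrite eqEcard sub /= cardsU AB0 cards0 subn0 cA cB.
  by rewrite /E Hcard mul2n -addnn subn1.
move=> x z txz.
have : (x, z) \in A :|: B by rewrite EAB inE.
rewrite inE; case/orP=> /imsetP[y]; rewrite !inE => yr [] e1 e2.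
  by left; subst.
by right; subst.
Qed.

Lemma tree_sym (I : finType) (t : rel I) : is_tree t -> symmetric t.
Proof. by case. Qed.
Lemma tree_conn (I : finType) (t : rel I) r : is_tree t -> forall y, connect t r y.
Proof. by case. Qed.

Lemma par_step (I : finType) (t : rel I) r : is_tree t -> forall x, x != r ->
  t x (par t r x) /\ (depth t r (par t r x)).+1 = depth t r x.
Proof. by move=> tr x xr; apply: par_spec (tree_sym tr) (tree_conn r tr) xr. Qed.

Lemma depth_iter (I : finType) (t : rel I) r : is_tree t -> forall x k,
  depth t r (iter k (par t r) x) = depth t r x - k.
Proof.
move=> tr x; elim=> [|k IH]; first by rewrite subn0.
rewrite iterS; set z := iter k _ x in IH *.
case: (eqVneq z r) => [zr|zr].
  by rewrite zr par_r depth_r; rewrite zr depth_r in IH; lia.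
have [_ dz] := par_step tr zr; lia.
Qed.

Lemma connect_cross (T : finType) (R : rel T) (D : pred T) x y :
  connect R x y -> x \in D -> y \notin D ->
  exists a b, [/\ R a b, a \in D & b \notin D].
Proof.
case/connectP=> q pq ->; elim: q x pq => [|z q IH] x /=.
  by move=> _ ->.
case/andP=> Rxz pq xD lD.
case: (boolP (z \in D)) => zD; first exact: (IH z pq zD lD).
by exists x, z.
Qed.

Definition topS (I : finType) (t : rel I) r (S : {set I}) : I :=
  odflt r [pick x | (x \in S) && [forall y in S, depth t r x <= depth t r y]].

Lemma topS_spec (I : finType) (t : rel I) r (S : {set I}) : S != set0 ->
  topS t r S \in S /\ forall y, y \in S -> depth t r (topS t r S) <= depth t r y.
Proof.
case/set0Pn=> x0 xS.
rewrite /topS; case: (pickP [pred x | (x \in S) && [forall y in S, depth t r x <= depth t r y]]) => [z /andP[zS /forallP H]|none] /=.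
  by split=> // y yS; have := H y; rewrite yS.
case: (arg_minnP (depth t r) xS) => z zS zmin.
have zS' : z \in S := zS; have := none z; rewrite /= zS' /=; move/negbT/negP; case.
by apply/forallP=> y; apply/implyP=> yS; apply: zmin.
Qed.

Lemma top_step (I : finType) (t : rel I) r (S : {set I}) s y : is_tree t ->
  connected_in t S -> s \in S -> (forall z, z \in S -> depth t r s <= depth t r z) ->
  y \in S -> y != s -> par t r y \in S.
Proof.
move=> tr cS sS smin yS ys.
have := forallP cS y; rewrite yS /= => /forallP /(_ s); rewrite sS /= => cys.
pose D := [pred z | iter (depth t r z - depth t r y) (par t r) z == y].
have yD : y \in D by rewrite inE subnn.
have sD : s \notin D.
  by rewrite inE (_ : _ - _ = 0) /=; [rewrite eq_sym | apply/eqP; rewrite subn_eq0 smin].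
have [a [b [/and3P[tab aS bS] aD bD]]] := connect_cross cys yD sD.
move: aD bD; rewrite !inE => /eqP aD bD.
have daya : depth t r y <= depth t r a.
  case: (leqP (depth t r y) (depth t r a)) => // lt.
  move: aD; rewrite (_ : _ - _ = 0) /= => [ay|]; last by lia.
  by move: lt; rewrite ay ltnn.
case: (tree_edges r tr tab) => [[ar eb]|[br ab]].
  rewrite eb in bS bD.
  case: (eqVneq a y) => [ay0|ay]; first by rewrite -ay0.
  have [_ da] := par_step tr ar.
  case E: (depth t r a - depth t r y) => [|n].
    by move: aD; rewrite E /= => aD; rewrite aD eqxx in ay.
  move: bD; rewrite (_ : depth t r (par t r a) - depth t r y = n); last by lia.
  by rewrite -iterSr -E aD eqxx.
have [_ db] := par_step tr br.
move: bD; rewrite (_ : depth t r b - depth t r y = (depth t r a - depth t r y).+1); last by rewrite -db -ab; lia.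
by rewrite iterSr -ab aD eqxx.
Qed.

Lemma chain_in (I : finType) (t : rel I) r (S : {set I}) y : is_tree t ->
  connected_in t S -> S != set0 -> y \in S ->
  (forall k, k <= depth t r y - depth t r (topS t r S) -> iter k (par t r) y \in S) /\
  iter (depth t r y - depth t r (topS t r S)) (par t r) y = topS t r S.
Proof.
move=> tr cS S0 yS; have [sS smin] := topS_spec t r S0.
set s := topS t r S in sS smin *.
have H1 : forall k, k <= depth t r y - depth t r s -> iter k (par t r) y \in S.
  elim=> [//|k IH] lk.
  have zS := IH (ltnW lk); rewrite iterS.
  apply: (top_step tr cS sS smin zS).
  apply/eqP=> zs; have := depth_iter r tr y k; rewrite zs; lia.
split=> //.
have zS := H1 _ (leqnn _); set z := iter _ _ y in zS *.
have dz : depth t r z = depth t r s by rewrite /z (depth_iter r tr); have := smin y yS; lia.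
apply/eqP; apply/negP=> /negP zs.
have pS := top_step tr cS sS smin zS zs.
case: (eqVneq z r) => [zr|zr].
  have : s = r by apply: (depth0 (tree_conn r tr s)); rewrite -dz zr depth_r.
  by move=> sr; rewrite zr sr eqxx in zs.
have [_ dp] := par_step tr zr; have := smin _ pS; lia.
Qed.

Lemma top_in (I : finType) (t : rel I) r (S S' : {set I}) x : is_tree t ->
  connected_in t S -> connected_in t S' -> x \in S -> x \in S' ->
  depth t r (topS t r S) <= depth t r (topS t r S') -> topS t r S' \in S.
Proof.
move=> tr cS cS' xS xS' le.
have S0 : S != set0 by apply/set0Pn; exists x.
have S0' : S' != set0 by apply/set0Pn; exists x.
have [_ <-] := chain_in r tr cS' S0' xS'.
have [H _] := chain_in r tr cS S0 xS; apply: H.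
exact: leq_sub2l.
Qed.

Lemma chain_connect (I : finType) (t : rel I) r (X : {set I}) x n : is_tree t ->
  (forall k, k <= n -> iter k (par t r) x \in X) ->
  connect (induced_rel t X) x (iter n (par t r) x).
Proof.
move=> tr; elim: n => [|n IH] H; first exact: connect0.
apply: connect_trans (IH (fun k lk => H k (leqW lk))) _.
rewrite iterS; set z := iter n _ x.
case: (eqVneq z r) => [zr|zr]; first by rewrite zr par_r connect0.
have [tz _] := par_step tr zr.
apply: connect1; rewrite /induced_rel tz /=.
by rewrite (H n (leqnSn n)) -iterS H.
Qed.

Lemma seq_max (T : eqType) (g : T -> nat) (s : seq T) : s != [::] ->
  exists2 x, x \in s & forall y, y \in s -> g y <= g x.
Proof.
elim: s => [//|a s IH] _.
case: (eqVneq s [::]) => [->|sn].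
  by exists a; rewrite ?inE // => y; rewrite inE => /eqP ->.
have [x xs xmax] := IH sn.
case: (leqP (g a) (g x)) => le.
  exists x; first by rewrite inE xs orbT.
  by move=> y; rewrite inE => /orP[/eqP ->|]; [|apply: xmax].
exists a; first by rewrite inE eqxx.
move=> y; rewrite inE => /orP[/eqP -> //|ys].
by apply: leq_trans (xmax y ys) (ltnW le).
Qed.

Lemma induced_sym (I : finType) (t : rel I) (X : {set I}) :
  symmetric t -> symmetric (induced_rel t X).
Proof. by move=> ts x y; rewrite /induced_rel ts; case: (t y x) => //=; apply: andbC. Qed.

Lemma helly (I : finType) (t : rel I) (F : seq {set I}) : is_tree t -> F != [::] ->
  (forall S, S \in F -> connected_in t S) ->
  (forall S S', S \in F -> S' \in F -> S :&: S' != set0) ->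
  (exists x, forall S, S \in F -> x \in S) /\
  connected_in t [set x : I | all (fun S : {set I} => x \in S) F].
Proof.
move=> tr Fn cF pF.
have [r _] : exists r, r \in I by apply/card_gt0P; case: tr.
have [S0 S0F S0max] := seq_max (fun S => depth t r (topS t r S)) Fn.
have ne S : S \in F -> S != set0 by move=> SF; have := pF S S SF SF; rewrite setIid.
have topin : forall S, S \in F -> topS t r S0 \in S.
  move=> S SF; have /set0Pn [x] := pF S S0 SF S0F; rewrite inE => /andP[xS xS0].
  exact: (top_in tr (cF S SF) (cF S0 S0F) xS xS0 (S0max S SF)).
split; first by exists (topS t r S0).
have sI : topS t r S0 \in [set x : I | all (fun S : {set I} => x \in S) F] by rewrite inE; apply/allP.
have toS : forall x, x \in [set x : I | all (fun S : {set I} => x \in S) F] ->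
    connect (induced_rel t [set x : I | all (fun S : {set I} => x \in S) F]) x (topS t r S0).
  move=> x; rewrite inE => /allP xF.
  have [_ <-] := chain_in r tr (cF S0 S0F) (ne S0 S0F) (xF S0 S0F).
  apply: chain_connect => // k lk; rewrite inE; apply/allP=> S SF.
  have [H _] := chain_in r tr (cF S SF) (ne S SF) (xF S SF); apply: H.
  apply: leq_trans lk _; apply: leq_sub2l; exact: S0max.
apply/forallP=> x; apply/implyP=> xI; apply/forallP=> y; apply/implyP=> yI.
apply: connect_trans (toS x xI) _.
rewrite (sym_connect_sym (induced_sym _ (tree_sym tr))).
exact: toS.
Qed.

Lemma conn_mono (I : finType) (T : rel I) (S X : {set I}) a b :
  S \subset X -> connected_in T S -> a \in S -> b \in S ->
  connect (induced_rel T X) a b.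
Proof.
move=> sSX cS aS bS.
have := forallP cS a; rewrite aS /= => /forallP /(_ b); rewrite bS /=.
apply: connect_sub => x y /and3P[Txy xS yS]; apply: connect1.
by rewrite /induced_rel Txy (subsetP sSX _ xS) (subsetP sSX _ yS).
Qed.

Lemma union_conn (I W : finType) (T : rel I) (g : rel W) (C : {set W})
  (N : W -> {set I}) :
  connected_in g C -> (forall h, h \in C -> connected_in T (N h)) ->
  (forall h h', h \in C -> h' \in C -> g h h' -> N h :&: N h' != set0) ->
  connected_in T [set i | [exists h in C, i \in N h]].
Proof.
move=> cC cN link; set X := [set i | _].
have sub h : h \in C -> N h \subset X.
  by move=> hC; apply/subsetP=> i iN; rewrite inE; apply/existsP; exists h; rewrite hC.
apply/forallP=> x; apply/implyP; rewrite inE => /existsP[h /andP[hC xN]].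
apply/forallP=> y; apply/implyP; rewrite inE => /existsP[h' /andP[h'C yN]].
have := forallP cC h; rewrite hC /= => /forallP /(_ h'); rewrite h'C /=.
case/connectP=> q pq hq.
suff : forall a, a \in C -> (forall z, z \in N a -> connect (induced_rel T X) x z) ->
    path (induced_rel g C) a q ->
    forall z, z \in N (last a q) -> connect (induced_rel T X) x z.
  by move=> H; apply: (H h hC) => //; [move=> z zN; exact: conn_mono (sub h hC) (cN h hC) xN zN | rewrite -hq].
elim: q {pq hq} => [|b q IH] a aC Qa /=; first by [].
case/andP=> /and3P[gab _ bC] pq; apply: IH => // z zN.
have /set0Pn [m] := link a b aC bC gab; rewrite inE => /andP[ma mb].
apply: connect_trans (Qa m ma) _.
exact: conn_mono (sub b bC) (cN b bC) mb zN.
Qed.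

Definition helly_concl (I : finType) (t : rel I) (F : seq {set I}) :=
  (exists x, forall S, S \in F -> x \in S) /\
  connected_in t [set x : I | all (fun S : {set I} => x \in S) F].

Lemma reduce (V W I : finType) (e : rel V) (f : rel W) (T : rel I)
  (Bg : I -> {set V * W}) (n : nat) (C : 'I_n -> {set W}) (w : nat) :
  symmetric e -> irreflexive f ->
  tree_decomposition (strong_prod e f) T Bg -> (forall i, #|Bg i| <= w.+1) ->
  0 < n -> (forall j, C j != set0) -> (forall j, connected_in f (C j)) ->
  (forall j j', j != j' -> [disjoint C j & C j']) ->
  (forall j j', j != j' -> [exists x in C j, exists y in C j', f x y]) ->
  0 < #|V| ->
  has_tw_le e ((w.+1 %/ n).-1) /\ n <= w.+1.
Proof.
move=> e_sym f_irr [tr cov ecov ncon] wB n0 Cne Cc Cdis Cadj Vne.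
pose N x := [set i | x \in Bg i].
have adj v u h h' : (v == u) || e v u -> (h == h') || f h h' ->
    N (v, h) :&: N (u, h') != set0.
  move=> vu hh; case: (eqVneq (v, h) (u, h')) => [<-|neq].
    have [i vi] := cov (v, h); apply/set0Pn; exists i; by rewrite !inE vi.
  have [i /andP[i1 i2]] := ecov (v, h) (u, h') (introT and3P (And3 neq vu hh)).
  by apply/set0Pn; exists i; rewrite !inE i1 i2.
pose U v j := [set i | [exists h in C j, i \in N (v, h)]].
have Uc v j : connected_in T (U v j).
  apply: union_conn => //; first by move=> h _; exact: ncon.
  by move=> h h' _ _ fhh; apply: adj; rewrite ?eqxx ?fhh ?orbT.
have Uadj v u j j' : (v == u) || e v u -> U v j :&: U u j' != set0.
  move=> vu.
  have [x [y [xC yC hh]]] : exists x y, [/\ x \in C j, y \in C j' & (x == y) || f x y].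
    case: (eqVneq j j') => [<-|jj].
      by have /set0Pn [x xC] := Cne j; exists x, x; rewrite xC eqxx.
    have /existsP [x /andP[xC /existsP [y /andP[yC fxy]]]] := Cadj j j' jj.
    by exists x, y; rewrite xC yC fxy orbT.
  have /set0Pn [i] := adj v u x y vu hh; rewrite inE => /andP[i1 i2].
  apply/set0Pn; exists i; rewrite !inE; apply/andP; split.
    by apply/existsP; exists x; rewrite xC.
  by apply/existsP; exists y; rewrite yC.
pose Fam v := [seq U v j | j <- enum 'I_n].
pose B' i := [set v : V | all (fun S : {set I} => i \in S) (Fam v)].
have Famn v : Fam v != [::].
  rewrite /Fam; case E: (enum 'I_n) => [|a l] //.
  by move: (mem_enum 'I_n (Ordinal n0)); rewrite E.
have FamP v S : S \in Fam v -> exists j, S = U v j.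
  by case/mapP=> j _ ->; exists j.
have Famc v S : S \in Fam v -> connected_in T S.
  by case/FamP=> j ->.
have FamP2 u v S : S \in Fam u ++ Fam v -> exists a j, [/\ (a == u) || (a == v) & S = U a j].
  by rewrite mem_cat => /orP[] /FamP [j ->]; [exists u, j | exists v, j]; rewrite eqxx ?orbT.
have H2 u v : (u == v) || e u v ->
    helly_concl T (Fam u ++ Fam v).
  move=> uv; apply: (helly tr).
    by case: (Fam u) (Famn u).
    by move=> S /FamP2 [a [j [_ ->]]]; exact: Uc.
  move=> S S' /FamP2 [a [j [ha ->]]] /FamP2 [b [j' [hb ->]]]; apply: Uadj.
  by move: uv; case/orP: ha => /eqP ->; case/orP: hb => /eqP ->; rewrite ?eqxx // eq_sym e_sym.
have B'P i v : v \in B' i -> forall j, i \in U v j.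
  rewrite inE => /allP H j; apply: H; apply/mapP; exists j => //; exact: mem_enum.
have wd i : #|B' i| * n <= #|Bg i|.
  have [w0 _] := set0Pn _ (Cne (Ordinal n0)).
  pose g (p : V * 'I_n) := (p.1, odflt w0 [pick h | (h \in C p.2) && ((p.1, h) \in Bg i)]).
  have gP p : p \in setX (B' i) [set: 'I_n] ->
      ((g p).2 \in C p.2) && (g p \in Bg i).
    case: p => v j; rewrite inE /= => /andP[vB _].
    have := B'P i v vB j; rewrite inE => /existsP[h /andP[hC hN]].
    rewrite /g /=; case: (pickP [pred h | (h \in C j) && ((v, h) \in Bg i)]) => [h' //|none].
    by have := none h; rewrite /= hC; rewrite inE in hN; rewrite hN.
  rewrite -[n]card_ord -cardsT -cardsX -(card_in_imset (f := g)).
    apply: subset_leq_card; apply/subsetP => _ /imsetP[p pS ->].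
    by case/andP: (gP p pS).
  move=> [v j] [v' j'] pS p'S E.
  have h1 := gP _ pS; have h2 := gP _ p'S.
  rewrite E in h1; case: E => ev _; subst v'.
  move: h1 h2 => /andP[h1 _] /andP[h2 _].
  case: (eqVneq j j') => [-> //|jj].
  by rewrite (disjointFr (Cdis _ _ jj) h1) in h2.
have covB v : exists x, v \in B' x.
  have [[x Hx] _] := H2 v v (introT orP (or_introl (eqxx v))); exists x; rewrite inE.
  by apply/allP => S SF; apply: Hx; rewrite mem_cat SF.
have td : tree_decomposition e T B'.
  split => //.
  - move=> u v euv; have [[x Hx] _] := H2 u v (introT orP (or_intror euv)).
    exists x; rewrite !inE; apply/andP; split; apply/allP => S SF; apply: Hx;
      by rewrite mem_cat SF ?orbT.
  - move=> v; have [_ c] := H2 v v (introT orP (or_introl (eqxx v))).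
    rewrite (_ : [set i | v \in B' i] = [set x : I | all (fun S : {set I} => x \in S) (Fam v ++ Fam v)]) //.
    by apply/setP=> i; rewrite !inE all_cat andbb.
split.
  exists I, T, B'; split => // i.
  have : #|B' i| <= w.+1 %/ n by rewrite leq_divRL // (leq_trans (wd i) (wB i)).
  move=> h; apply: leq_trans h _; exact: leqSpred.
have [v _] : exists v, v \in V by apply/card_gt0P.
have [x vx] := covB v.
have : 0 < #|B' x| by apply/card_gt0P; exists v.
move=> pos; apply: leq_trans (leq_trans (wd x) (wB x)).
by rewrite -{1}(mul1n n) leq_mul2r pos orbT.
Qed.

Lemma tw_spec (V : finType) (e : rel V) :
  has_tw_le e (treewidth e) /\ forall m, has_tw_le e m -> treewidth e <= m.
Proof.
rewrite /treewidth; case: ex_minnP => m Hm Hmin; split.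
  by move: Hm; rewrite /dec_tw; case: excluded_middle_informative.
move=> k Hk; apply: Hmin; rewrite /dec_tw.
by case: excluded_middle_informative.
Qed.

Lemma K0 (W : finType) (f : rel W) : has_K_minor f 0.
Proof.
apply/existsP; exists [ffun => set0].
by apply/and4P; split; apply/forallP; case.
Qed.

Lemma hadwiger_spec (W : finType) (f : rel W) : has_K_minor f (hadwiger f).
Proof.
have [n0 n0A hn0] := @eq_bigmax_cond _ (fun n : 'I_#|W|.+1 => has_K_minor f n)
  (fun n => nat_of_ord n) (introT card_gt0P (ex_intro _ ord0 (K0 f))).
have -> : hadwiger f = n0 := hn0.
exact: n0A.
Qed.

Theorem mainTheorem12 (V W : finType) (e : rel V) (f : rel W)
  (e_sym : symmetric e) (e_irr : irreflexive e)
  (f_sym : symmetric f) (f_irr : irreflexive f)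
  (V_ne : 0 < #|V|) (W_ne : 0 < #|W|) :
  hadwiger f * (treewidth e + 1) - 1 <= treewidth (strong_prod e f).
Proof.
have := hadwiger_spec f; set n := hadwiger f.
have [[I [T [Bg [td wB]]]] _] := tw_spec (strong_prod e f).
set w := treewidth (strong_prod e f) in wB *.
have [_ kmin] := tw_spec e; set k := treewidth e in kmin *.
case: (posnP n) => [-> //|n0].
case/existsP=> C /and4P[/forallP ne /forallP cn /forallP dis /forallP adj].
have [htw nw] := reduce (C := C) e_sym f_irr td wB n0 ne cn
  (fun j j' => implyP (forallP (dis j) j')) (fun j j' => implyP (forallP (adj j) j')) V_ne.
have kq := kmin _ htw.
have qpos : 0 < w.+1 %/ n by rewrite divn_gt0.
have qm := leq_divM w.+1 n.
have : n * (k + 1) <= n * (w.+1 %/ n) by rewrite leq_mul2l; apply/orP; right; lia.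
lia.
Qed.
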